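(* Let $B$ be a unital $C^*$-algebra with a $*$-isomorphism $\psi:B\to M_n\otimes B$ satisfying $\psi(1)=I_n\otimes1$, let $A$ be a maximal abelian $*$-subalgebra of $B$, and let $\phi:A\to\mathbb{C}$ be a unital algebra homomorphism extended to a positive contraction $\phi:B\to\mathbb{C}$. If $\sigma_1(A)\subset A$, then $\phi_{m+1}(A)\subset M_n\otimes\phi_m(A)$ for all $m\ge1$.
   Context: $M_n=M_n(\mathbb{C})$, identity $I_n$. Define $\psi_0=\mathrm{id}_B$, $\psi_{m+1}=(\mathrm{id}^{\otimes m}\otimes\psi)\circ\psi_m:B\to M_n^{\otimes(m+1)}\otimes B$. With $f(b)=I_n\otimes b$, $\sigma_1=\psi^{-1}\circ f:B\to B$. For $m\ge1$, $\phi_m=(\mathrm{id}^{\otimes m}\otimes\phi)\circ\psi_m:B\to M_n^{\otimes m}$. *)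

(* Defs.v *)
From mathcomp Require Import all_boot all_algebra.
From mathcomp Require Import complex reals.
Import GRing.Theory Num.Theory.
Set Implicit Arguments. Unset Strict Implicit. Unset Printing Implicit Defensive.
Local Open Scope ring_scope.
Local Open Scope complex_scope.

Section CStar.
Variable R : realType.
Local Notation C := R[i].

Definition is_unital_cstar (B : algType C) (star : B -> B) (nrm : B -> R) : Prop :=
  [/\
      (forall x, 0 <= nrm x) /\ (forall x, nrm x = 0 -> x = 0),
      (forall x y, nrm (x + y) <= nrm x + nrm y) /\
      (forall (c : C) x, (nrm (c *: x))%:C = `|c| * (nrm x)%:C),
      (forall x y, nrm (x * y) <= nrm x * nrm y),
      (forall u : nat -> B,
         (forall e : R, 0 < e -> exists N, forall p q, (N <= p)%N -> (N <= q)%N ->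
              nrm (u p - u q) < e) ->
         exists l, forall e : R, 0 < e -> exists N, forall p, (N <= p)%N ->
              nrm (u p - l) < e) &
      [/\ (forall x, star (star x) = x),
          (forall x y, star (x + y) = star x + star y),
          (forall (c : C) x, star (c *: x) = c^* *: star x),
          (forall x y, star (x * y) = star y * star x) &
          (forall x, nrm (star x * x) = nrm x ^+ 2)]].

Variable B : algType C.
Variable star : B -> B.

(* M_n (x) B is identified with n x n matrices over B; its involution *)
Definition mx_star n (X : 'M[B]_n) : 'M[B]_n := \matrix_(i, j) star (X j i).

Definition is_star_iso n (psi : B -> 'M[B]_n) : Prop :=
  [/\ bijective psi,
      (forall x y, psi (x + y) = psi x + psi y),
      (forall (c : C) x, psi (c *: x) = map_mx ( *:%R c) (psi x)),
      (forall x y, psi (x * y) = psi x *m psi y) &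
      (forall x, psi (star x) = mx_star (psi x))].

Definition is_star_subalg (S : B -> Prop) : Prop :=
  [/\ S 0, (forall x y, S x -> S y -> S (x + y)),
      (forall (c : C) x, S x -> S (c *: x)),
      (forall x y, S x -> S y -> S (x * y)) &
      (forall x, S x -> S (star x))].

Definition is_abelian (S : B -> Prop) : Prop :=
  forall x y, S x -> S y -> x * y = y * x.

Definition is_masa (A : B -> Prop) : Prop :=
  [/\ is_star_subalg A, is_abelian A &
      forall S, is_star_subalg S -> is_abelian S ->
        (forall x, A x -> S x) -> forall x, S x -> A x].

Definition is_pos_contraction (nrm : B -> R) (phi : B -> C) : Prop :=
  [/\ (forall x y, phi (x + y) = phi x + phi y),
      (forall (c : C) x, phi (c *: x) = c * phi x),
      (forall x, 0 <= phi (star x * x)) &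
      (forall x, `|phi x| <= (nrm x)%:C)].

Definition is_unital_hom_on (A : B -> Prop) (phi : B -> C) : Prop :=
  phi 1 = 1 /\ forall x y, A x -> A y -> phi (x * y) = phi x * phi y.

(* Multi-indices for M_n^{(x) m}: a tuple (i_1,...,i_m) of indices in 'I_n,
   represented as a function 'I_m -> 'I_n.  An element of M_n^{(x) m} (x) B is
   a function (row multi-index) -> (column multi-index) -> B. *)
Definition mindex n m := 'I_m -> 'I_n.

(* drop the last tensor factor / take the last tensor factor *)
Definition mi_init n m (I : mindex n m.+1) : mindex n m :=
  fun k => I (widen_ord (leqnSn m) k).
Definition mi_last n m (I : mindex n m.+1) : 'I_n := I ord_max.
(* prepend a first tensor factor *)
Definition mi_cons n m (i : 'I_n) (I : mindex n m) : mindex n m.+1 :=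
  fun k => match unlift ord0 k with Some k' => I k' | None => i end.

(* psi_0 = id, psi_{m+1} = (id^{(x)m} (x) psi) o psi_m *)
Fixpoint psi_m n (psi : B -> 'M[B]_n) (m : nat)
  : B -> mindex n m -> mindex n m -> B :=
  match m with
  | 0 => fun b _ _ => b
  | m'.+1 => fun b I J =>
      psi (@psi_m n psi m' b (mi_init I) (mi_init J)) (mi_last I) (mi_last J)
  end.

(* phi_m = (id^{(x)m} (x) phi) o psi_m *)
Definition phi_m n (psi : B -> 'M[B]_n) (phi : B -> C) (m : nat)
  (b : B) : mindex n m -> mindex n m -> C :=
  fun I J => phi (@psi_m n psi m b I J).

(* f(b) = I_n (x) b, and sigma_1 = psi^{-1} o f maps A into A *)
Definition sigma1_preserves n (psi : B -> 'M[B]_n) (A : B -> Prop) : Prop :=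
  forall a, A a -> forall b, psi b = a%:M -> A b.

Definition phi_m_image n psi phi m (A : B -> Prop)
  (X : mindex n m -> mindex n m -> C) : Prop :=
  exists2 a, A a & forall I J, @phi_m n psi phi m a I J = X I J.

(* M_n (x) S for a subspace S of M_n^{(x) m}: the elements of
   M_n^{(x)(m+1)} all of whose (i,j) blocks (first tensor factor) lie in S *)
Definition tensor_Mn n m (S : (mindex n m -> mindex n m -> C) -> Prop)
  (X : mindex n m.+1 -> mindex n m.+1 -> C) : Prop :=
  forall i j : 'I_n, S (fun I J => X (mi_cons i I) (mi_cons j J)).

End CStar.

Arguments psi_m [R B n] psi m b _ _.
Arguments phi_m [R B n] psi phi m b _ _.
Arguments phi_m_image [R B n] psi phi m A X.

(* Main.v *)
Require Import Defs.
From mathcomp Require Import all_boot all_algebra.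
From mathcomp Require Import complex reals.
From Stdlib Require Import FunctionalExtensionality.
Import GRing.Theory Num.Theory.
Local Open Scope ring_scope.
Local Open Scope complex_scope.

Lemma mx_scalar_entry (Rg : pzRingType) n (M : 'M[Rg]_n) (x : Rg) i j :
  (M *m x%:M) i j = M i j * x.
Proof.
rewrite !mxE (bigD1 j) //= big1 => [|k /negbTE nk]; rewrite mxE ?eqxx ?nk.
  by rewrite mulr1n addr0.
by rewrite mulr0n mulr0.
Qed.

Lemma scalar_mx_entry (Rg : pzRingType) n (M : 'M[Rg]_n) (x : Rg) i j :
  (x%:M *m M) i j = x * M i j.
Proof. by rewrite mul_scalar_mx mxE. Qed.

Lemma init_cons n m (i : 'I_n) (I : mindex n m.+1) :
  mi_init (mi_cons i I) = mi_cons i (mi_init I).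
Proof.
apply: functional_extensionality => k.
rewrite /mi_init /mi_cons.
case: (unliftP ord0 k) => [k'|] ->.
  rewrite /=.
  rewrite (_ : widen_ord _ (lift ord0 k') = lift ord0 (widen_ord (leqnSn m) k')).
    by rewrite liftK.
  by apply: val_inj.
rewrite (_ : widen_ord _ ord0 = ord0); last by apply: val_inj.
by rewrite unlift_none.
Qed.

Lemma last_cons n m (i : 'I_n) (I : mindex n m.+1) :
  mi_last (mi_cons i I) = mi_last I.
Proof.
rewrite /mi_last /mi_cons.
have -> : (ord_max : 'I_m.+2) = lift ord0 (ord_max : 'I_m.+1) by apply: val_inj.
by rewrite liftK.
Qed.

Lemma psi_m_cons (R : realType) (B : algType R[i]) n (psi : B -> 'M[B]_n) m b i j I J :
  psi_m psi m.+1 b (mi_cons i I) (mi_cons j J) = psi_m psi m (psi b i j) I J.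
Proof.
elim: m b I J => [|m IH] b I J.
  rewrite /= /mi_last /mi_cons.
  have -> : (ord_max : 'I_1) = ord0 by apply: val_inj.
  by rewrite unlift_none.
transitivity (psi (psi_m psi m.+1 b (mi_init (mi_cons i I)) (mi_init (mi_cons j J)))
  (mi_last (mi_cons i I)) (mi_last (mi_cons j J))); first by [].
by rewrite !init_cons !last_cons IH.
Qed.

Section Masa.
Variables (R : realType) (B : algType R[i]) (star : B -> B) (nrm : B -> R) (A : B -> Prop).
Hypothesis hC : is_unital_cstar star nrm.
Hypothesis hA : is_masa star A.

Lemma selfadj_in (h : B) : star h = h -> (forall t, A t -> h * t = t * h) -> A h.
Proof.
move=> hh hc.
case: hC => _ _ _ _ [ss sD sZ sM _].
case: hA => [[A0 AD AZ AM AS] Aab Amax].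
pose T z := (forall t, A t -> z * t = t * z) /\ z * h = h * z.
pose S x := forall z, T z -> x * z = z * x.
have Tstar z : T z -> T (star z).
  move=> [zA zh]; split.
    move=> t At; rewrite -[t]ss -!sM zA ?ss //; exact: AS.
  by rewrite -hh -!sM zh.
have AT t : A t -> T t.
  by move=> At; split; [move=> t' At'; exact: Aab | by rewrite hc].
have hT : T h by split.
have ST x : S x -> T x.
  by move=> Sx; split; [move=> t At; rewrite Sx //; exact: AT | rewrite Sx].
apply: (Amax S) => //.
- split.
  + by move=> z _; rewrite mul0r mulr0.
  + by move=> x y Sx Sy z Tz; rewrite mulrDl mulrDr Sx // Sy.
  + by move=> c x Sx z Tz; rewrite -scalerAl -scalerAr Sx.
  + by move=> x y Sx Sy z Tz; rewrite -mulrA Sy // mulrA Sx // mulrA.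
  + move=> x Sx z Tz.
    have := Sx _ (Tstar _ Tz).
    move=> e; rewrite -[z]ss -!sM e.
    by [].
- by move=> x y Sx Sy; rewrite Sy //; exact: ST.
- by move=> x Ax z [zA _]; rewrite zA.
- by move=> z [].
Qed.

Lemma comm_in (y : B) :
  (forall t, A t -> y * t = t * y) -> (forall t, A t -> star y * t = t * star y) -> A y.
Proof.
move=> hy hys.
case: hC => _ _ _ _ [ss sD sZ sM _].
case: hA => [[A0 AD AZ AM AS] Aab Amax].
pose h := y + star y.
pose k := 'i *: (y - star y).
have s0 : star 0 = 0.
  have := sD 0 0; rewrite addr0 => /(congr1 (fun u => u - star 0)).
  by rewrite addrK subrr => <-.
have sN x : star (- x) = - star x.
  by have := sD (-x) x; rewrite addNr s0 => /esym/eqP; rewrite addr_eq0 => /eqP.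
have Ah : A h.
  apply: selfadj_in; first by rewrite /h sD ss addrC.
  by move=> t At; rewrite /h mulrDl mulrDr hy // hys.
have Ak : A k.
  apply: selfadj_in.
    by rewrite /k sZ sD sN ss conjCi scaleNr -scalerN opprD opprK addrC.
  move=> t At; rewrite /k -scalerAl -scalerAr mulrBl mulrBr hy // hys //.
have -> : y = 2^-1 *: (h + (- 'i) *: k).
  rewrite /h /k scalerA mulNr -expr2 sqrCi opprK scale1r addrA.
  rewrite addrAC addrK -mulr2n.
  by rewrite -scalerMnr scalerMnl -mulr_natr mulVf ?scale1r // pnatr_eq0.
exact: (AZ _ _ (AD _ _ Ah (AZ _ _ Ak))).
Qed.
End Masa.

Theorem proposition3p6 (R : realType) (B : algType R[i]) (star : B -> B)
  (nrm : B -> R) (n : nat) (psi : B -> 'M[B]_n) (A : B -> Prop)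
  (phi : B -> R[i]) :
  is_unital_cstar star nrm ->
  is_star_iso star psi ->
  psi 1 = 1%:M ->
  is_masa star A ->
  is_unital_hom_on A phi ->
  is_pos_contraction star nrm phi ->
  sigma1_preserves psi A ->
  forall m : nat, (1 <= m)%N ->
    forall a, A a ->
      tensor_Mn (phi_m_image psi phi m A) (phi_m psi phi m.+1 a).
Proof.
move=> hC [psib psiD psiZ psiM psiS] psi1 hA _ _ s1 m _ a Aa i j.
have hA' := hA.
case: hA' => [[A0 AD AZ AM AS] Aab Amax].
have key b : A b -> forall t, A t -> forall i j, psi b i j * t = t * psi b i j.
  move=> Ab t At i' j'.
  case: psib => g psiK gK.
  have Hc : psi (g t%:M) = t%:M by rewrite gK.
  have Ac := s1 t At _ Hc.
  have e : psi (b * g t%:M) = psi (g t%:M * b) by rewrite Aab.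
  move: e; rewrite !psiM Hc => /(congr1 (fun M : 'M[B]_n => M i' j')).
  by rewrite mx_scalar_entry scalar_mx_entry.
exists (psi a i j).
  apply: (@comm_in R B star nrm A hC hA).
    by move=> t At; apply: key.
  move=> t At.
  have -> : star (psi a i j) = psi (star a) j i by rewrite psiS /mx_star mxE.
  by apply: key => //; apply: AS.
move=> I J; rewrite /phi_m.
rewrite (@psi_m_cons R B n psi m a i j I J).
reflexivity.
Qed.
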